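(* Let $m,n$ be positive integers and $s,k$ even positive integers. There exists a ${}^2\mathrm{H}(m,n;s,k)$ if and only if $ms=nk$, $2\le s\le n$, $2\le k\le m$, and $s,k$ are not both equal to $2$.
   Context: For positive integers $m,n,s,k,\lambda,t$ with $t$ dividing $\frac{2nk}{\lambda}$, let $v=\frac{2nk}{\lambda}+t$ and $J$ the subgroup of $\mathbb{Z}_v$ of order $t$. A ${}^\lambda\mathrm{H}_t(m,n;s,k)$ is an $m\times n$ partially filled array with entries in $\mathbb{Z}_v$ such that: (a) each row has exactly $s$ and each column exactly $k$ filled cells; (b) the multiset $\{\pm x: x$ an entry of a filled cell$\}$ contains each element of $\mathbb{Z}_v\setminus J$ exactly $\lambda$ times and no element of $J$; (c) every row and every column sums to $0$ in $\mathbb{Z}_v$. The subscript $t$ is omitted when $t=1$, so ${}^2\mathrm{H}(m,n;s,k)$ is over $\mathbb{Z}_{nk+1}$. *)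

(* Defs.v *)
From mathcomp Require Import all_boot all_order all_algebra.
Set Implicit Arguments. Unset Strict Implicit. Unset Printing Implicit Defensive.
Import GRing.Theory.
Local Open Scope ring_scope.

(* A partially filled m x n array with entries in 'Z_v is a function
   'I_m -> 'I_n -> option 'Z_v (None = empty cell). *)

Definition row_filled (m n v : nat) (A : 'I_m -> 'I_n -> option 'Z_v) (i : 'I_m) : nat :=
  #|[set j : 'I_n | A i j != None]|.
Definition col_filled (m n v : nat) (A : 'I_m -> 'I_n -> option 'Z_v) (j : 'I_n) : nat :=
  #|[set i : 'I_m | A i j != None]|.

(* Multiplicity of y in the multiset {+-x : x entry of a filled cell}. *)
Definition pm_mult (m n v : nat) (A : 'I_m -> 'I_n -> option 'Z_v) (y : 'Z_v) : nat :=
  (#|[set p : 'I_m * 'I_n | A p.1 p.2 == Some y]|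
   + #|[set p : 'I_m * 'I_n | A p.1 p.2 == Some (- y)]|)%N.

Definition cellv (v : nat) (c : option 'Z_v) : 'Z_v := if c is Some x then x else 0.

(* ^lambda H_t(m,n;s,k) with lambda = 2 and t = 1: over Z_v, v = n*k+1,
   J = {0}.  Note n*k+1 >= 2 whenever n,k > 0, so 'Z_(n*k+1) is really Z_v. *)
Definition is_2H (m n s k : nat) (A : 'I_m -> 'I_n -> option 'Z_(n * k + 1)) : Prop :=
  [/\ (forall i, row_filled A i = s),
      (forall j, col_filled A j = k),
      (forall y : 'Z_(n * k + 1), pm_mult A y = if y == 0 then 0%N else 2%N),
      (forall i, \sum_(j < n) cellv (A i j) = 0)
    & (forall j, \sum_(i < m) cellv (A i j) = 0)].
Arguments is_2H : clear implicits.

(* Main.v *)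
Require Import Defs.
From mathcomp Require Import all_boot all_order all_algebra.
From mathcomp Require Import zify ring.
Set Implicit Arguments. Unset Strict Implicit. Unset Printing Implicit Defensive.
Import GRing.Theory.

Module Part1.

Section BigGen.
Variables (R : Type) (idx : R) (op : Monoid.com_law idx).

Lemma split_sum (a b : nat) (F : nat -> R) :
  \big[op/idx]_(p < a * b) F p = \big[op/idx]_(i < a) \big[op/idx]_(u < b) F (i * b + u)%N.
Proof.
elim: a => [|a IH]; first by rewrite mul0n !big_ord0.
rewrite big_ord_recr /= -IH mulSn addnC.
rewrite big_split_ord /=.
by congr (op _ _); apply: eq_bigr => u _; rewrite addnC.
Qed.

Lemma sum_pick (N x : nat) (G : nat -> R) :
  \big[op/idx]_(u < N) (if (u : nat) == x then G u else idx) = if (x < N)%N then G x else idx.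
Proof.
case: ifP => Hx.
  rewrite (bigD1 (Ordinal Hx)) //= eqxx big1 ?Monoid.mulm1 // => u Hu.
  case: eqP => // E; move: Hu; suff -> : u = Ordinal Hx by rewrite eqxx.
  exact: val_inj.
apply: big1 => u _; case: eqP => // E; by move: (ltn_ord u); rewrite E Hx.
Qed.

Lemma modn_key (n b u j : nat) : (u < n)%N -> (j < n)%N ->
  (((b + u) %% n == j) = (u == (j + n - b %% n) %% n)).
Proof.
move=> Hu Hj.
have Hn : (0 < n)%N by lia.
rewrite -modnDml.
have Hr : (b %% n < n)%N by rewrite ltn_mod.
move: (b %% n) Hr => r Hr.
have E1 : forall x, (n <= x)%N -> (x < n + n)%N -> x %% n = (x - n)%N.
  move=> x H1 H2. rewrite -{1}(subnK H1) modnDr modn_small //. lia.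
case: (ltnP (r + u) n) => H1.
  rewrite (modn_small H1).
  case: (ltnP (j + n - r) n) => H2.
    rewrite (modn_small H2). apply/eqP/eqP; lia.
  rewrite E1 //; last lia. apply/eqP/eqP; lia.
rewrite E1 //; last lia.
case: (ltnP (j + n - r) n) => H2.
  rewrite (modn_small H2). apply/eqP/eqP; lia.
rewrite E1 //; last lia. apply/eqP/eqP; lia.
Qed.

Definition off (n b j : nat) := ((j + n - b %% n) %% n)%N.

Lemma L1 (n s b : nat) (G : nat -> R) : (s <= n)%N ->
  \big[op/idx]_(j < n) (if (off n b j < s)%N then G (b + off n b j)%N else idx)
  = \big[op/idx]_(u < s) G (b + u)%N.
Proof.
move=> Hsn.
transitivity (\big[op/idx]_(j < n) \big[op/idx]_(u < s)
   (if (b + u) %% n == j then G (b + u)%N else idx)).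
  apply: eq_bigr => j _.
  rewrite -(sum_pick s (off n b j) (fun u => G (b + u)%N)). apply: eq_bigr => u _.
  by rewrite modn_key // (leq_trans (ltn_ord u) Hsn).
rewrite exchange_big /=. apply: eq_bigr => u _.
have Hn : (0 < n)%N by move: (ltn_ord u) Hsn; lia.
transitivity (\big[op/idx]_(j < n) (if (j : nat) == (b + u) %% n then G (b + u)%N else idx)).
  by apply: eq_bigr => j _; rewrite eq_sym.
by rewrite (sum_pick n ((b + u) %% n) (fun _ => G (b + u)%N)) ltn_mod Hn.
Qed.

Lemma L2 (m n s j : nat) (G : nat -> R) : (s <= n)%N -> (j < n)%N ->
  \big[op/idx]_(i < m) (if (off n (i * s) j < s)%N then G (i * s + off n (i * s) j)%N else idx)
  = \big[op/idx]_(p < m * s) (if p %% n == j then G p else idx).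
Proof.
move=> Hsn Hj.
rewrite (split_sum m s (fun p => if p %% n == j then G p else idx)). apply: eq_bigr => i _.
rewrite -(sum_pick s (off n (i * s) j) (fun u => G (i * s + u)%N)). apply: eq_bigr => u _.
by rewrite modn_key // (leq_trans (ltn_ord u) Hsn).
Qed.

Lemma col_split (n k j : nat) (G : nat -> R) : (j < n)%N ->
  \big[op/idx]_(p < k * n) (if p %% n == j then G p else idx)
  = \big[op/idx]_(l < k) G (l * n + j)%N.
Proof.
move=> Hj. rewrite (split_sum k n (fun p => if p %% n == j then G p else idx)). apply: eq_bigr => l _.
transitivity (\big[op/idx]_(u < n) (if (u:nat) == j then G (l * n + u)%N else idx)).
  by apply: eq_bigr => u _; rewrite modnMDl modn_small.
by rewrite (sum_pick n j (fun u => G (l * n + u)%N)) Hj.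
Qed.

End BigGen.

End Part1.
Import Part1.
Module Part2.

Definition H2 (v m n s k : nat) (A : 'I_m -> 'I_n -> option 'Z_v) : Prop :=
  [/\ (forall i, row_filled A i = s),
      (forall j, col_filled A j = k),
      (forall y : 'Z_v, pm_mult A y = if y == 0%R then 0%N else 2%N),
      (forall i, (\sum_(j < n) cellv (A i j) = 0)%R)
    & (forall j, (\sum_(i < m) cellv (A i j) = 0)%R)].
Arguments H2 : clear implicits.

Lemma sum1_ord n : (\sum_(i < n) 1 = n)%N.
Proof. by rewrite sum1_card card_ord. Qed.

Lemma card_as_sum (T : finType) (P : pred T) : #|[set x | P x]| = (\sum_x P x)%N.
Proof.
rewrite -sum1_card big_mkcond /=; apply: eq_bigr => x _.
by rewrite inE; case: (P x).
Qed.

Section Layout.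
Variables (v m n s k : nat) (f : nat -> 'Z_v).
Hypotheses (Hsn : (s <= n)%N) (Hms : (m * s = k * n)%N).

Definition lay (i : 'I_m) (j : 'I_n) : option 'Z_v :=
  if (off n (i * s) j < s)%N then Some (f (i * s + off n (i * s) j)%N) else None.

Lemma lay_row_filled i : row_filled lay i = s.
Proof.
rewrite /row_filled card_as_sum.
transitivity (\sum_(j < n) (if (off n (i * s) j < s)%N then (fun _ => 1%N) (i * s + off n (i * s) j)%N else 0%N))%N.
  by apply: eq_bigr => j _; rewrite /lay; case: ifP.
by rewrite (L1 addn (i * s) (fun _ => 1%N) Hsn) sum1_ord.
Qed.

Lemma lay_col_filled j : col_filled lay j = k.
Proof.
rewrite /col_filled card_as_sum.
transitivity (\sum_(i < m) (if (off n (i * s) j < s)%N then (fun _ => 1%N) (i * s + off n (i * s) j)%N else 0%N))%N.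
  by apply: eq_bigr => i _; rewrite /lay; case: ifP.
rewrite (L2 addn m (fun _ => 1%N) Hsn (ltn_ord j)) Hms.
by rewrite (col_split addn k (fun _ => 1%N) (ltn_ord j)) sum1_ord.
Qed.

Lemma lay_count y : #|[set p : 'I_m * 'I_n | lay p.1 p.2 == Some y]| = (\sum_(p < m * s) (f p == y))%N.
Proof.
rewrite card_as_sum -(pair_bigA _ (fun i j => (lay i j == Some y) : nat)) /=.
rewrite (split_sum addn m s (fun p => (f p == y) : nat)). apply: eq_bigr => i _.
transitivity (\sum_(j < n) (if (off n (i * s) j < s)%N then (fun p => (f p == y) : nat) (i * s + off n (i * s) j)%N else 0%N))%N.
  by apply: eq_bigr => j _; rewrite /lay; case: ifP.
by rewrite (L1 addn (i * s) (fun p => (f p == y) : nat) Hsn).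
Qed.

Lemma lay_rowsum (i : 'I_m) : (\sum_(u < s) f (i * s + u)%N = 0)%R -> (\sum_(j < n) cellv (lay i j) = 0)%R.
Proof.
move=> H.
transitivity (\sum_(j < n) (if (off n (i * s) j < s)%N then f (i * s + off n (i * s) j)%N else 0))%R.
  by apply: eq_bigr => j _; rewrite /lay; case: ifP.
by rewrite (L1 +%R (i * s) f Hsn).
Qed.

Lemma lay_colsum (j : 'I_n) : (\sum_(p < m * s) (if (p %% n)%N == j then f p else 0) = 0)%R ->
   (\sum_(i < m) cellv (lay i j) = 0)%R.
Proof.
move=> H.
transitivity (\sum_(i < m) (if (off n (i * s) j < s)%N then f (i * s + off n (i * s) j)%N else 0))%R.
  by apply: eq_bigr => i _; rewrite /lay; case: ifP.
by rewrite (L2 +%R m f Hsn (ltn_ord j)).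
Qed.

End Layout.

Lemma layout (v m n s k : nat) (f : nat -> 'Z_v) :
  (s <= n)%N -> (m * s = k * n)%N ->
  (forall i, (i < m)%N -> (\sum_(u < s) f (i * s + u)%N = 0)%R) ->
  (forall j, (j < n)%N -> (\sum_(p < m * s) (if (p %% n)%N == j then f p else 0) = 0)%R) ->
  (forall y : 'Z_v, (\sum_(p < m * s) (f p == y) + \sum_(p < m * s) (f p == (- y)%R))%N
                    = if y == 0%R then 0%N else 2%N) ->
  exists A, H2 v m n s k A.
Proof.
move=> Hsn Hms Hr Hc Hp.
exists (@lay v m n s f); split.
- exact: lay_row_filled.
- exact: lay_col_filled.
- by move=> y; rewrite /pm_mult !lay_count.
- by move=> i; apply: (lay_rowsum Hsn); apply: (Hr _ (ltn_ord i)).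
- by move=> j; apply: (lay_colsum Hsn); apply: (Hc _ (ltn_ord j)).
Qed.

End Part2.
Import Part2.
Module Part3.
Local Open Scope ring_scope.

Section FW.
Variables (v : nat) (W : nat -> 'Z_v).

Definition fW (p : nat) : 'Z_v := if odd p then W p./2 else - W p./2.

Lemma fW_even q : fW (q * 2)%N = - W q.
Proof. by rewrite /fW muln2 odd_double doubleK. Qed.

Lemma fW_odd q : fW (q * 2 + 1)%N = W q.
Proof.
rewrite /fW muln2 addn1 oddS odd_double /=.
by rewrite uphalf_double.
Qed.

Lemma fW_rows (s i : nat) : ~~ odd s -> \sum_(u < s) fW (i * s + u)%N = 0.
Proof.
move=> Hs. have Es : s = (s./2 * 2)%N by rewrite muln2 even_halfK.
move: (s./2) Es => c Es. rewrite Es.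
rewrite (split_sum +%R c 2 (fun u => fW (i * (c * 2) + u)%N)).
apply: big1 => w _.
rewrite !big_ord_recr big_ord0 /= add0r.
have -> : (i * (c * 2) + (w * 2 + 0))%N = ((i * c + w) * 2)%N by lia.
have -> : (i * (c * 2) + (w * 2 + 1))%N = ((i * c + w) * 2 + 1)%N by lia.
by rewrite fW_even fW_odd addNr.
Qed.

Lemma fW_pm (N : nat) (y : 'Z_v) :
  (\sum_(p < N * 2) (fW p == y) + \sum_(p < N * 2) (fW p == - y))%N
  = (2 * \sum_(q < N) ((W q == y) + (W q == - y)))%N.
Proof.
rewrite (split_sum addn N 2 (fun p => (fW p == y) : nat)).
rewrite (split_sum addn N 2 (fun p => (fW p == - y) : nat)).
rewrite -big_split /= mul2n -addnn -big_split /=.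
apply: eq_bigr => q _.
rewrite !big_ord_recr !big_ord0 /= !add0n !addn0 fW_even fW_odd.
by rewrite eqr_oppLR eqr_opp [in X in (X + _)%N]addnC.
Qed.

Lemma fW_col (N n j : nat) :
  \sum_(p < N * 2) (if (p %% n)%N == j then fW p else 0)
  = \sum_(q < N) ((if ((q * 2) %% n)%N == j then - W q else 0)
                 + (if ((q * 2 + 1) %% n)%N == j then W q else 0)).
Proof.
rewrite (split_sum +%R N 2 (fun p => if (p %% n)%N == j then fW p else 0)).
apply: eq_bigr => q _.
by rewrite !big_ord_recr !big_ord0 /= add0r addn0 fW_even fW_odd.
Qed.

End FW.

End Part3.
Import Part3.
Module Part4.
Local Open Scope ring_scope.

Lemma mod_eq0_small (z v : nat) : (0 < z)%N -> (z < v + v)%N -> ((z %% v)%N == 0%N) = (z == v).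
Proof.
move=> H1 H2.
case: (ltnP z v) => H3.
  rewrite modn_small //. apply/eqP/eqP; lia.
rewrite -{1}(subnK H3) modnDr modn_small; last lia.
apply/eqP/eqP; lia.
Qed.

Section Class.
Variables (v N : nat).
Hypothesis Hv : v = (N + N).+1.
Hypothesis HN : (0 < N)%N.

Lemma v_gt1 : (1 < v)%N.
Proof. lia. Qed.

Lemma valZ_lt (y : 'Z_v) : (nat_of_ord y < v)%N.
Proof. have := ltn_ord y. move: (nat_of_ord y) => a. by rewrite Zp_cast ?v_gt1. Qed.

Lemma natZ_eq (x : nat) (y : 'Z_v) : (x < v)%N -> ((x%:R : 'Z_v) == y) = (x == nat_of_ord y).
Proof.
move=> Hx. apply/eqP/eqP => [<-|->].
  by rewrite /= val_Zp_nat ?v_gt1 // modn_small.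
by rewrite natr_Zp.
Qed.

Lemma natZ_eqN (x : nat) (y : 'Z_v) : (0 < x)%N -> (x < v)%N ->
  ((x%:R : 'Z_v) == - y) = (x + nat_of_ord y == v)%N.
Proof.
move=> H0 Hx. rewrite -addr_eq0.
rewrite -{1}(natr_Zp y) -natrD.
have -> : ((x + nat_of_ord y)%:R == 0 :> 'Z_v) = (((x + nat_of_ord y) %% v)%N == 0%N).
  apply/eqP/eqP => [H|H].
    by have := congr1 val H; rewrite /= val_Zp_nat ?v_gt1.
  by apply: val_inj; rewrite /= val_Zp_nat ?v_gt1.
apply: mod_eq0_small; first lia.
have := valZ_lt y. lia.
Qed.

Lemma class_sum (y : 'Z_v) :
  (\sum_(x < N) ((((x.+1)%:R : 'Z_v) == y) + (((x.+1)%:R : 'Z_v) == - y)))%N = (y != 0).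
Proof.
have Hy := valZ_lt y.
have E : forall x : 'I_N, ((((x.+1)%:R : 'Z_v) == y) + (((x.+1)%:R : 'Z_v) == - y))%N
     = ((x.+1 == nat_of_ord y) + (x.+1 + nat_of_ord y == v))%N.
  move=> x. have := ltn_ord x => Hx.
  rewrite natZ_eq; last lia. rewrite natZ_eqN //; lia.
rewrite (eq_bigr _ (fun x _ => E x)).
have Hy0 : (y != 0) = (nat_of_ord y != 0%N) by [].
rewrite Hy0.
case: (eqVneq (nat_of_ord y) 0%N) => Ha.
  rewrite Ha /=. apply: big1 => x _. have := ltn_ord x. lia.
set x0 := if (nat_of_ord y <= N)%N then (nat_of_ord y).-1 else (v - nat_of_ord y).-1.
have Hx0 : (x0 < N)%N by rewrite /x0; case: ifP; lia.
transitivity (\sum_(x < N) (if (x : nat) == x0 then (fun _ => 1%N) x else 0%N))%N.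
  apply: eq_bigr => x _. have := ltn_ord x. rewrite /x0 => Hx.
  case: (leqP (nat_of_ord y) N) => H1; case: eqP => H2; case: eqP => H3; case: eqP => H4 //=; lia.
by rewrite (sum_pick addn N x0 (fun _ => 1%N)) Hx0.
Qed.

Variables (c : nat -> nat) (b : nat -> bool).
Hypothesis Hc : forall q, (q < N)%N -> (0 < c q <= N)%N.
Hypothesis Hinj : forall q q', (q < N)%N -> (q' < N)%N -> c q = c q' -> q = q'.

Definition Wc (q : nat) : 'Z_v := if b q then (c q)%:R else - (c q)%:R.

Lemma Wc_class (y : 'Z_v) :
  (\sum_(q < N) ((Wc q == y) + (Wc q == - y)))%N = (y != 0).
Proof.
have hP : forall q : 'I_N, ((c q).-1 < N)%N.
  move=> q; have := Hc (ltn_ord q); lia.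
pose h (q : 'I_N) : 'I_N := Ordinal (hP q).
have hinj : injective h.
  move=> q q' E. have := congr1 val E => /= E2.
  apply: val_inj; apply: Hinj; [exact: ltn_ord | exact: ltn_ord |].
  move: E2; rewrite /h /=; have := Hc (ltn_ord q); have := Hc (ltn_ord q'); lia.
rewrite -(class_sum y) [RHS](reindex_inj hinj) /=.
apply: eq_bigr => q _.
have -> : (c q).-1.+1 = c q by have := Hc (ltn_ord q); lia.
rewrite /Wc; case: (b q) => //.
by rewrite eqr_oppLR eqr_opp addnC.
Qed.

End Class.

Section Block.
Variables (v D K : nat) (pi : nat -> nat -> nat) (sg : nat -> nat -> bool).
Hypothesis HD : (0 < D)%N.
Hypothesis Hpi : forall l t, (t < D)%N -> (pi l t < D)%N.
Hypothesis Hpinj : forall l t t', (t < D)%N -> (t' < D)%N -> pi l t = pi l t' -> t = t'.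

Definition cB (q : nat) : nat := (q %/ D * D + pi (q %/ D) (q %% D) + 1)%N.
Definition WB (q : nat) : 'Z_v := if sg (q %/ D) (q %% D) then (cB q)%:R else - (cB q)%:R.

Lemma cB_range q : (q < K * D)%N -> (0 < cB q <= K * D)%N.
Proof.
move=> Hq. rewrite /cB.
have H1 : (q %/ D < K)%N by rewrite ltn_divLR.
have H2 := Hpi (q %/ D)%N (ltn_pmod q HD).
have H3 : (q %/ D * D + D <= K * D)%N by rewrite -mulSnr leq_mul2r H1 orbT.
move: (q %/ D * D)%N (K * D)%N (pi _ _) H2 H3 => X Y Z H2 H3. lia.
Qed.

Lemma cB_inj q q' : cB q = cB q' -> q = q'.
Proof.
rewrite /cB => E.
have H2 := Hpi (q %/ D)%N (ltn_pmod q HD).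
have H2' := Hpi (q' %/ D)%N (ltn_pmod q' HD).
have El : (q %/ D = q' %/ D)%N.
  have := congr1 (fun z => (z.-1 %/ D)%N) E. rewrite /= !addn1 /=.
  move: (pi _ (q %% D)) (pi _ (q' %% D)) H2 H2' => X Y HX HY. by rewrite !divnMDl // (divn_small HX) (divn_small HY) !addn0.
rewrite El in E H2.
have Ep : (pi (q' %/ D) (q %% D) = pi (q' %/ D) (q' %% D))%N.
  move: (pi _ (q %% D)) (pi _ (q' %% D)) (q' %/ D * D)%N E H2 H2' => X Y Z. lia.
have Et := Hpinj (ltn_pmod q HD) (ltn_pmod q' HD) Ep.
by rewrite (divn_eq q D) (divn_eq q' D) El Et.
Qed.

Lemma WB_block l t : (t < D)%N ->
  WB (l * D + t)%N = if sg l t then ((l * D + pi l t + 1)%N)%:R else - ((l * D + pi l t + 1)%N)%:R.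
Proof.
move=> Ht. rewrite /WB /cB divnMDl // divn_small // addn0.
by rewrite modnMDl modn_small.
Qed.

End Block.

End Part4.
Import Part4.
Module Part5.
Local Open Scope ring_scope.

Section Cols.
Variables (v : nat) (W : nat -> 'Z_v).

Lemma sum_if_const (K : nat) (b : bool) (G : nat -> 'Z_v) :
  \sum_(l < K) (if b then G l else 0) = if b then \sum_(l < K) G l else 0.
Proof. by case: b => //; rewrite big1. Qed.

Lemma col_even (D K j : nat) : (0 < D)%N ->
  (forall t, (t < D)%N -> \sum_(l < K) W (l * D + t)%N = 0) ->
  \sum_(q < K * D) ((if ((q * 2) %% (D * 2))%N == j then - W q else 0)
                 + (if ((q * 2 + 1) %% (D * 2))%N == j then W q else 0)) = 0.
Proof.
move=> HD HB.
rewrite (split_sum +%R K D (fun q => (if ((q * 2) %% (D * 2))%N == j then - W q else 0)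
                 + (if ((q * 2 + 1) %% (D * 2))%N == j then W q else 0))).
rewrite exchange_big /=. apply: big1 => t _.
have Ht := ltn_ord t.
transitivity (\sum_(l < K) ((if (t * 2)%N == j then - W (l * D + t)%N else 0)
                 + (if (t * 2 + 1)%N == j then W (l * D + t)%N else 0))).
  apply: eq_bigr => l _.
  have -> : ((l * D + t) * 2 + 1 = l * (D * 2) + (t * 2 + 1))%N by ring.
  have -> : ((l * D + t) * 2 = l * (D * 2) + t * 2)%N by ring.
  rewrite !modnMDl !modn_small //; lia.
rewrite big_split /= (sum_if_const K _ (fun l => - W (l * D + t)%N)) (sum_if_const K _ (fun l => W (l * D + t)%N)).
rewrite sumrN HB //.
by rewrite oppr0; case: ifP; case: ifP; rewrite ?addr0.
Qed.

Lemma col_odd (D h K j : nat) (T : 'Z_v) : D = (h * 2 + 1)%N ->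
  (forall t, (t < D)%N -> \sum_(l < K) W (l * D + t)%N = T) ->
  \sum_(q < K * D) ((if ((q * 2) %% D)%N == j then - W q else 0)
                 + (if ((q * 2 + 1) %% D)%N == j then W q else 0)) = 0.
Proof.
move=> HDh HB.
have HD : (0 < D)%N by lia.
rewrite (split_sum +%R K D (fun q => (if ((q * 2) %% D)%N == j then - W q else 0)
                 + (if ((q * 2 + 1) %% D)%N == j then W q else 0))).
rewrite exchange_big /=.
transitivity (\sum_(t < D) ((if ((t * 2) %% D)%N == j then - T else 0)
                 + (if ((t * 2 + 1) %% D)%N == j then T else 0))).
  apply: eq_bigr => t _.
  have Ht := ltn_ord t.
  transitivity (\sum_(l < K) ((if ((t * 2) %% D)%N == j then - W (l * D + t)%N else 0)
                 + (if ((t * 2 + 1) %% D)%N == j then W (l * D + t)%N else 0))).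
    apply: eq_bigr => l _.
    have -> : ((l * D + t) * 2 + 1 = (l * 2) * D + (t * 2 + 1))%N by ring.
    have -> : ((l * D + t) * 2 = (l * 2) * D + t * 2)%N by ring.
    by rewrite !modnMDl.
  rewrite big_split /= (sum_if_const K _ (fun l => - W (l * D + t)%N)) (sum_if_const K _ (fun l => W (l * D + t)%N)).
  by rewrite sumrN HB.
rewrite big_split /=.
pose hh (t : 'I_D) : 'I_D := Ordinal (ltn_pmod (t + h + 1)%N HD).
have hinj : injective hh.
  move=> a b E. have := congr1 (fun z : 'I_D => ((z + h) %% D)%N) E. rewrite /= !modnDml.
  have -> : (a + h + 1 + h = a + D)%N by lia.
  have -> : (b + h + 1 + h = b + D)%N by lia.
  rewrite !modnDr !modn_small // => E2. exact: val_inj.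
rewrite [X in X + _](reindex_inj hinj) /=.
rewrite -big_split /=. apply: big1 => t _.
rewrite modnMml.
have -> : ((t + h + 1) * 2 = (t * 2 + 1) + D)%N by lia.
rewrite modnDr. by case: ifP; rewrite ?addr0 // addNr.
Qed.

End Cols.

End Part5.
Import Part5.
Module Part6.
Local Open Scope ring_scope.

Lemma assemble (m n s k v D K : nat) (pi : nat -> nat -> nat) (sg : nat -> nat -> bool) :
  (0 < D)%N -> (0 < K)%N ->
  (forall l t, (t < D)%N -> (pi l t < D)%N) ->
  (forall l t t', (t < D)%N -> (t' < D)%N -> pi l t = pi l t' -> t = t') ->
  (s <= n)%N -> ~~ odd s -> (m * s = k * n)%N -> (m * s = (K * D) * 2)%N ->
  v = (K * D + K * D).+1 ->
  (forall j, (j < n)%N ->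
     \sum_(q < K * D) ((if ((q * 2) %% n)%N == j then - WB v D pi sg q else 0)
                 + (if ((q * 2 + 1) %% n)%N == j then WB v D pi sg q else 0)) = 0) ->
  exists A, H2 v m n s k A.
Proof.
move=> HD HK Hpi Hpinj Hsn Hs Hms1 Hms2 Hv Hcol.
apply: (layout (f := fW (WB v D pi sg))) => //.
- by move=> i _; apply: fW_rows.
- by move=> j Hj; rewrite Hms2 fW_col; apply: Hcol.
- move=> y. rewrite Hms2 fW_pm.
  have HN : (0 < K * D)%N by rewrite muln_gt0 HK HD.
  have := @Wc_class v (K * D) Hv HN (cB D pi) (fun q => sg (q %/ D) (q %% D))%N.
  move=> H. rewrite /WB. rewrite (H _ _ y).
  + by case: (y == 0).
  + by move=> q Hq; apply: cB_range.
  + by move=> q q' _ _; apply: cB_inj.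
Qed.

End Part6.
Import Part6.
Module Part7.
Local Open Scope ring_scope.

Definition sgB (l : nat) : bool := ((l %% 4 == 0) || (l %% 4 == 3))%N.

Lemma patB (v g d y : nat) :
  \sum_(l < g * 4) (if sgB l then ((l * d + y + 1)%N%:R : 'Z_v) else - (l * d + y + 1)%N%:R) = 0.
Proof.
rewrite (split_sum +%R g 4 (fun l => if sgB l then ((l * d + y + 1)%N%:R : 'Z_v) else - (l * d + y + 1)%N%:R)).
apply: big1 => i _.
rewrite !big_ord_recr big_ord0 /= /sgB !modnMDl /=.
ring.
Qed.

Lemma patA (v g n y : nat) :
  \sum_(l < g * 2) (if ~~ odd l then ((l * n + y + 1)%N%:R : 'Z_v) else - (l * n + y + 1)%N%:R)
  = - ((g * n)%N%:R).
Proof.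
rewrite (split_sum +%R g 2 (fun l => if ~~ odd l then ((l * n + y + 1)%N%:R : 'Z_v) else - (l * n + y + 1)%N%:R)).
transitivity (\sum_(i < g) (- (n%:R : 'Z_v))).
  apply: eq_bigr => i _.
  rewrite !big_ord_recr big_ord0 /= !oddD !oddM /= ?andbF /=.
  ring.
rewrite sumrN sumr_const card_ord. congr (- _). by rewrite natrM mulr_natl.
Qed.

End Part7.
Import Part7.
Module Part8.
Local Open Scope ring_scope.

Lemma Zv0 (v : nat) : (1 < v)%N -> (v%:R : 'Z_v) = 0.
Proof. move=> Hv. apply: val_inj. by rewrite /= val_Zp_nat // modnn. Qed.

Lemma caseB0 (m n s k v d g : nat) : (0 < d)%N -> (0 < g)%N -> n = (d * 2)%N -> k = (g * 4)%N ->
  (s <= n)%N -> ~~ odd s -> (m * s = n * k)%N -> v = (n * k).+1 -> exists A, H2 v m n s k A.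
Proof.
move=> Hd Hg En Ek Hsn Hs Hms Hv. subst n k.
apply: (@assemble m (d * 2) s (g * 4) v d (g * 4) (fun _ t => t) (fun l _ => sgB l)) => //.
- lia.
- by rewrite Hms mulnC.
- rewrite Hms; ring.
- rewrite Hv; congr S; ring.
move=> j Hj. apply: col_even => // t Ht.
transitivity (\sum_(l < g * 4) (if sgB l then ((l * d + t + 1)%N%:R : 'Z_v) else - (l * d + t + 1)%N%:R)).
  apply: eq_bigr => l _. by rewrite (WB_block v (fun _ t => t) (fun l _ => sgB l) Hd l Ht).
exact: patB.
Qed.

Lemma caseA0 (m n s k v h g : nat) : (0 < g)%N -> n = (h * 2 + 1)%N -> k = (g * 2 * 2)%N ->
  (s <= n)%N -> ~~ odd s -> (m * s = n * k)%N -> v = (n * k).+1 -> exists A, H2 v m n s k A.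
Proof.
move=> Hg En Ek Hsn Hs Hms Hv. subst k.
have Hn : (0 < n)%N by lia.
apply: (@assemble m n s (g * 2 * 2) v n (g * 2) (fun _ t => t) (fun l _ => ~~ odd l)) => //.
- lia.
- by rewrite Hms mulnC.
- rewrite Hms; ring.
- rewrite Hv; congr S; ring.
move=> j Hj. apply: (@col_odd _ _ n h (g * 2) j (- ((g * n)%N%:R))) => // t Ht.
transitivity (\sum_(l < g * 2) (if ~~ odd l then ((l * n + t + 1)%N%:R : 'Z_v) else - (l * n + t + 1)%N%:R)).
  apply: eq_bigr => l _. by rewrite (WB_block v (fun _ t => t) (fun l _ => ~~ odd l) Hn l Ht).
exact: patA.
Qed.

Definition piB2 (g d l t : nat) : nat := if l == (g * 4 + 5)%N then (d - 1 - t)%N else t.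
Definition sgB2 (g l t : nat) : bool := if (l < g * 4)%N then sgB l else ((l - g * 4 != 0) && (l - g * 4 != 2))%N.

Lemma caseB2 (m n s k v d g : nat) : (0 < d)%N -> n = (d * 2)%N -> k = (g * 4 + 6)%N ->
  (s <= n)%N -> ~~ odd s -> (m * s = n * k)%N -> v = (n * k).+1 -> exists A, H2 v m n s k A.
Proof.
move=> Hd En Ek Hsn Hs Hms Hv. subst n k.
have Hv1 : (1 < v)%N by lia.
apply: (@assemble m (d * 2) s (g * 4 + 6) v d (g * 4 + 6) (piB2 g d) (sgB2 g)) => //.
- lia.
- by move=> l t Ht; rewrite /piB2; case: ifP => _; lia.
- by move=> l t t' Ht Ht'; rewrite /piB2; case: ifP => _; lia.
- by rewrite Hms mulnC.
- rewrite Hms; ring.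
- rewrite Hv; congr S; ring.
move=> j Hj. apply: col_even => // t Ht.
transitivity (\sum_(l < g * 4 + 6) (if sgB2 g l t then ((l * d + piB2 g d l t + 1)%N%:R : 'Z_v)
                else - (l * d + piB2 g d l t + 1)%N%:R)).
  apply: eq_bigr => l _. by rewrite (WB_block v (piB2 g d) (sgB2 g) Hd l Ht).
rewrite big_split_ord /=.
have -> : \sum_(i < g * 4) (if sgB2 g (lshift 6 i) t then ((lshift 6 i * d + piB2 g d (lshift 6 i) t + 1)%N%:R : 'Z_v)
                else - (lshift 6 i * d + piB2 g d (lshift 6 i) t + 1)%N%:R) = 0.
  apply: (etrans _ (patB v g d t)). apply: eq_bigr => i _ /=.
  have Hi := ltn_ord i.
  rewrite /sgB2 /piB2 Hi. have -> : ((i : nat) == g * 4 + 5)%N = false by apply/eqP; lia.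
  by [].
rewrite add0r.
rewrite !big_ord_recr big_ord0 /= add0r.
rewrite /sgB2 /piB2 !ltnNge !leq_addr /= !addKn !eqn_add2l /=.
transitivity ((((d * 2) * (g * 4 + 6)).+1)%N%:R : 'Z_v); last by rewrite -Hv Zv0.
have He : (d - 1 - t + t + 1 = d)%N by lia.
move: (d - 1 - t)%N He => e He.
rewrite -He. ring.
Qed.

Definition pi1 (h t : nat) : nat := if (t <= h)%N then (t + h)%N else (t - h - 1)%N.
Definition pi2 (h t : nat) : nat := ((h * 2 + 1) - 1 - (if (t <= h)%N then t * 2 else t * 2 - (h * 2 + 1)))%N.
Definition piA1 (h l t : nat) : nat := if l == 1%N then pi1 h t else if l == 2%N then pi2 h t else t.
Definition sgA1 (l t : nat) : bool := ((l < 3) || ~~ odd (l - 3))%N.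

Lemma caseA1 (m n s k v h g : nat) : n = (h * 2 + 1)%N -> k = ((3 + g * 2) * 2)%N ->
  (s <= n)%N -> ~~ odd s -> (m * s = n * k)%N -> v = (n * k).+1 -> exists A, H2 v m n s k A.
Proof.
move=> En Ek Hsn Hs Hms Hv. subst k.
have Hn : (0 < n)%N by lia.
apply: (@assemble m n s ((3 + g * 2) * 2) v n (3 + g * 2) (piA1 h) sgA1) => //.
- move=> l t Ht; rewrite /piA1 /pi1 /pi2; case: ifP => _; [|case: ifP => _ //]; case: (leqP t h) => ?; lia.
- move=> l t t' Ht Ht'; rewrite /piA1 /pi1 /pi2; case: ifP => _; [|case: ifP => _ //];
  case: (leqP t h) => ?; case: (leqP t' h) => ?; lia.
- by rewrite Hms mulnC.
- rewrite Hms; ring.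
- rewrite Hv; congr S; ring.
move=> j Hj.
apply: (@col_odd _ _ n h (3 + g * 2) j (((4 * n + h + 2)%N%:R) - ((g * n)%N%:R))) => // t Ht.
transitivity (\sum_(l < 3 + g * 2) (if sgA1 l t then ((l * n + piA1 h l t + 1)%N%:R : 'Z_v)
                else - (l * n + piA1 h l t + 1)%N%:R)).
  apply: eq_bigr => l _. by rewrite (WB_block v (piA1 h) sgA1 Hn l Ht).
rewrite big_split_ord /=.
congr (_ + _).
  rewrite !big_ord_recr big_ord0 /= add0r /sgA1 /piA1 /=.
  rewrite -!natrD. congr (_%:R).
  rewrite /pi1 /pi2. case: (leqP t h) => ?; lia.
apply: (etrans _ (patA v g n (3 * n + t))). apply: eq_bigr => i _ /=.
rewrite /sgA1 /piA1 add3n /=.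
have -> : (i.+3 - 3 = i)%N by lia.
have -> : (i.+3 * n + t + 1 = i * n + (3 * n + t) + 1)%N by ring.
by [].
Qed.

End Part8.
Import Part8.
Module Part9.
Local Open Scope ring_scope.

Lemma construct (m n s k v : nat) : (2 <= s)%N -> (s <= n)%N -> ~~ odd s -> ~~ odd k -> (4 <= k)%N ->
  (m * s = n * k)%N -> v = (n * k).+1 -> exists A, H2 v m n s k A.
Proof.
move=> H2s Hsn Hs Hk H4k Hms Hv.
have Ek := odd_double_half k. rewrite (negbTE Hk) add0n -muln2 in Ek.
move: (k./2) Ek => r Ek.
have Er := odd_double_half r. rewrite -muln2 in Er.
have En := odd_double_half n. rewrite -muln2 in En.
move: (r./2) Er => g Er.
move: (n./2) En => d En.
case: (boolP (odd n)) => Hn; rewrite ?Hn in En; case: (boolP (odd r)) => Hr; rewrite ?Hr in Er;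
  rewrite /= ?add0n in En Er.
- apply: (@caseA1 m n s k v d (g - 1)) => //; lia.
- apply: (@caseA0 m n s k v d g) => //; lia.
- apply: (@caseB2 m n s k v d (g - 1)) => //; lia.
- apply: (@caseB0 m n s k v d g) => //; lia.
Qed.

Lemma transpose_H2 v m n s k (B : 'I_n -> 'I_m -> option 'Z_v) :
  H2 v n m k s B -> H2 v m n s k (fun i j => B j i).
Proof.
case=> Hr Hc Hp Hrs Hcs; split => //.
move=> y. rewrite -(Hp y) /pm_mult !card_as_sum.
rewrite -(pair_bigA _ (fun i j => (B j i == Some y) : nat)) -(pair_bigA _ (fun i j => (B j i == Some (-y)) : nat)).
rewrite -(pair_bigA _ (fun i j => (B i j == Some y) : nat)) -(pair_bigA _ (fun i j => (B i j == Some (-y)) : nat)).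
by rewrite [X in (X + _)%N]exchange_big [X in (_ + X)%N]exchange_big.
Qed.

Lemma line2 (v n : nat) (F : 'I_n -> option 'Z_v) (j1 : 'I_n) (x : 'Z_v) :
  #|[set j | F j != None]| = 2%N -> \sum_(j < n) cellv (F j) = 0 -> F j1 = Some x ->
  exists j2, j2 != j1 /\ F j2 = Some (- x).
Proof.
move=> Hc Hs Hx.
have /cards2P [a [b [Hab ES]]] : #|[set j | F j != None]| == 2%N by rewrite Hc.
have Hin : j1 \in [set j | F j != None] by rewrite inE Hx.
have [j2 [Hj2 ES2]] : exists j2, j2 != j1 /\ [set j | F j != None] = [set j1; j2].
  rewrite ES !inE in Hin. case/orP: Hin => /eqP E.
    by exists b; split; [rewrite E eq_sym | rewrite ES E].
  by exists a; split; [rewrite E | rewrite ES E setUC].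
have : j2 \in [set j | F j != None] by rewrite ES2 !inE eqxx orbT.
rewrite inE. case E2: (F j2) => [w|] // _.
exists j2; split => //. rewrite E2; congr Some.
move: Hs. rewrite (bigD1 j1) //= (bigD1 j2) //= Hx E2 /=.
rewrite big1; last first.
  move=> j /andP [H1 H2]. have : j \notin [set j | F j != None].
    by rewrite ES2 !inE negb_or H1 H2.
  by rewrite inE negbK => /eqP ->.
rewrite addr0 addrC => /eqP. by rewrite addr_eq0 => /eqP.
Qed.

Lemma not22 (m n : nat) (A : 'I_m -> 'I_n -> option 'Z_(n * 2 + 1)) :
  (0 < m)%N -> ~ H2 (n * 2 + 1) m n 2 2 A.
Proof.
move=> Hm [Hr Hc Hp Hrs Hcs].
pose i0 := Ordinal Hm.
have /set0Pn [j1] : [set j | A i0 j != None] != set0.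
  by rewrite -cards_eq0; have := Hr i0; rewrite /row_filled => ->.
rewrite inE. case E1: (A i0 j1) => [x|] // _.
have [j2 [Hj21 E2]] := line2 (Hr i0) (Hrs i0) E1.
have [i1 [Hi10 E3]] := line2 (Hc j1) (Hcs j1) E1.
have [j3 [Hj31 E4]] := line2 (Hr i1) (Hrs i1) E3.
rewrite opprK in E4.
have H1 : (2 <= #|[set p : 'I_m * 'I_n | A p.1 p.2 == Some x]|)%N.
  apply: (@leq_trans #|[set (i0, j1); (i1, j3)]|).
    by rewrite cards2 xpair_eqE negb_and [i0 == _]eq_sym Hi10.
  apply: subset_leq_card. apply/subsetP => p. rewrite !inE => /orP [] /eqP -> /=.
    by rewrite E1. by rewrite E4.
have H2' : (2 <= #|[set p : 'I_m * 'I_n | A p.1 p.2 == Some (- x)]|)%N.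
  apply: (@leq_trans #|[set (i0, j2); (i1, j1)]|).
    by rewrite cards2 xpair_eqE negb_and [i0 == _]eq_sym Hi10.
  apply: subset_leq_card. apply/subsetP => p. rewrite !inE => /orP [] /eqP -> /=.
    by rewrite E2. by rewrite E3.
have := Hp x. rewrite /pm_mult. case: (x == 0) => E; lia.
Qed.

End Part9.
Import Part9.

Theorem theorem4 (m n s k : nat) :
  (0 < m)%N -> (0 < n)%N -> (0 < s)%N -> (0 < k)%N -> ~~ odd s -> ~~ odd k ->
  (exists A : 'I_m -> 'I_n -> option 'Z_(n * k + 1), is_2H m n s k A)
  <-> [/\ (m * s = n * k)%N, (2 <= s <= n)%N, (2 <= k <= m)%N & ~ (s = 2 /\ k = 2)%N].
Proof.
move=> Hm Hn Hs0 Hk0 Hs Hk.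
have Es := odd_double_half s. rewrite (negbTE Hs) add0n -muln2 in Es.
have Ek := odd_double_half k. rewrite (negbTE Hk) add0n -muln2 in Ek.
split.
- case=> A HA.
  have HA' : H2 (n * k + 1) m n s k A := HA.
  case: HA' => Hr Hc Hp Hrs Hcs.
  have Hsn : (s <= n)%N.
    rewrite -(Hr (Ordinal Hm)) /row_filled. by apply: leq_trans (max_card _) _; rewrite card_ord.
  have Hkm : (k <= m)%N.
    rewrite -(Hc (Ordinal Hn)) /col_filled. by apply: leq_trans (max_card _) _; rewrite card_ord.
  split.
  + have E1 : (\sum_(i < m) row_filled A i = m * s)%N.
      by rewrite (eq_bigr (fun _ => s)) // sum_nat_const card_ord.
    have E2 : (\sum_(j < n) col_filled A j = n * k)%N.
      by rewrite (eq_bigr (fun _ => k)) // sum_nat_const card_ord.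
    apply: (etrans (esym E1)); apply: (etrans _ E2); rewrite /row_filled /col_filled.
    under eq_bigr do rewrite card_as_sum.
    under [RHS]eq_bigr do rewrite card_as_sum.
    by rewrite exchange_big.
  + apply/andP; split => //; lia.
  + apply/andP; split => //; lia.
  + case=> E2s E2k. subst s k. exact: (not22 Hm HA).
- case=> Hms /andP [H2s Hsn] /andP [H2k Hkm] Hnot.
  case: (leqP 4 k) => H4.
    have [A HA] := @construct m n s k (n * k + 1) H2s Hsn Hs Hk H4 Hms (addn1 _).
    by exists A.
  have Ek2 : k = 2%N by lia.
  have H4s : (4 <= s)%N.
    have : s <> 2%N by move=> E; apply: Hnot.
    lia.
  have Hv : (n * k + 1 = (n * k).+1)%N by rewrite addn1.
  have Hv2 : (n * k + 1 = (m * s).+1)%N by rewrite addn1 Hms.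
  have [B HB] := @construct n m k s (n * k + 1) H2k Hkm Hk Hs H4s (esym Hms) Hv2.
  exists (fun i j => B j i). exact: transpose_H2.
Qed.
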